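(* Let $p_0,p_1,p_2,T>0$, $q_k=p_k^{-1/2}$, $\Omega>0$, and let $$C=\tfrac1{16q_0^2}\Big[\big(1+\tfrac{q_0}{q_1}\big)^2\big(1+\tfrac{q_1}{q_2}\big)^2+\big(1-\tfrac{q_0}{q_1}\big)^2\big(1-\tfrac{q_1}{q_2}\big)^2\Big],\quad K=\tfrac1{8q_0^2}\big(1-\tfrac{q_0^2}{q_1^2}\big)\big(1-\tfrac{q_1^2}{q_2^2}\big),\quad \zeta=2q_1T,$$ $R=K/C$ and $J(s)=\frac1{2\pi}\int_0^{\Omega^{1/2}}\frac{e^{isu}}{C+K\cos\zeta u}\,du$ for $s\in\mathbb{R}$. Then for $s\in\mathbb{R}$, $$J(s)=\frac{\Omega^{1/2}}{2C\pi}\sum_{m=0}^\infty\sum_{l=0}^m\Big(-\frac R2\Big)^m\binom ml e^{i\frac{\Omega^{1/2}}2(s+(m-2l)\zeta)}\operatorname{sinc}\Big(\tfrac{\Omega^{1/2}}2(s+(m-2l)\zeta)\Big).$$ Moreover, if $J_M$ denotes the partial sum of this series over $0\le m\le M$, then $$\sup_{s\in\mathbb{R}}|J(s)-J_M(s)|\le\frac{\Omega^{1/2}}{2C\pi}\frac{|R|^{M+1}}{1-|R|}.$$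
   Context: $\operatorname{sinc}x=\frac{\sin x}{x}$ (with $\operatorname{sinc}0=1$). (These quantities are such that $|R|<1$.) *)

(* Defs.v *)
From Stdlib Require Import Reals.
From Coquelicot Require Import Coquelicot.
Open Scope R_scope.

Definition qk (p : R) : R := / sqrt p.

Definition Cconst (q0 q1 q2 : R) : R :=
  / (16 * q0 ^ 2) *
  ((1 + q0 / q1) ^ 2 * (1 + q1 / q2) ^ 2 + (1 - q0 / q1) ^ 2 * (1 - q1 / q2) ^ 2).

Definition Kconst (q0 q1 q2 : R) : R :=
  / (8 * q0 ^ 2) * (1 - q0 ^ 2 / q1 ^ 2) * (1 - q1 ^ 2 / q2 ^ 2).

Definition cis (theta : R) : C := (cos theta, sin theta).

Definition sinc (x : R) : R := if Req_EM_T x 0 then 1 else sin x / x.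

Definition Jfun (Cv Kv zeta Om s : R) : C :=
  (RtoC (/ (2 * PI)) *
   @RInt C_R_CompleteNormedModule
     (fun u => (cis (s * u) / RtoC (Cv + Kv * cos (zeta * u)))%C) 0 (sqrt Om))%C.

(* the (m,l) summand, without the prefactor Omega^{1/2}/(2 C pi) *)
Definition Jterm (Cv Kv zeta Om s : R) (m l : nat) : C :=
  let Rv := Kv / Cv in
  let x := sqrt Om / 2 * (s + (INR m - 2 * INR l) * zeta) in
  (RtoC ((- (Rv / 2)) ^ m * Binomial.C m l) * cis x * RtoC (sinc x))%C.

Definition Jinner (Cv Kv zeta Om s : R) (m : nat) : C :=
  sum_n (fun l => Jterm Cv Kv zeta Om s m l) m.

Definition Jpref (Cv Om : R) : R := sqrt Om / (2 * Cv * PI).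

Definition JM (Cv Kv zeta Om : R) (M : nat) (s : R) : C :=
  (RtoC (Jpref Cv Om) * sum_n (fun m => Jinner Cv Kv zeta Om s m) M)%C.

(* Main.v *)
Require Import Defs.
From Stdlib Require Import Reals Lra Lia Psatz.
From Coquelicot Require Import Coquelicot.
Open Scope R_scope.

Lemma test (a b c : C) : ((a + b) * c = a * c + c * b)%C.
Proof. ring. Qed.

Lemma C_R_norm (z : C) : @norm R_AbsRing C_R_NormedModule z = Cmod z.
Proof.
  destruct z as [x y].
  change (sqrt (Rabs x ^ 2 + Rabs y ^ 2) = sqrt (x^2+y^2)).
  rewrite !pow2_abs. reflexivity.
Qed.

Lemma is_RInt_C_pair (f : R -> C) a b (l : C) :
  is_RInt (fun t => fst (f t)) a b (fst l) ->
  is_RInt (fun t => snd (f t)) a b (snd l) ->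
  @is_RInt C_R_NormedModule f a b l.
Proof.
  intros H1 H2. destruct l as [l1 l2].
  exact (@is_RInt_fct_extend_pair R_NormedModule R_NormedModule f a b l1 l2 H1 H2).
Qed.

Lemma is_RInt_C_fst (f : R -> C) a b (l : C) :
  @is_RInt C_R_NormedModule f a b l -> is_RInt (fun t => fst (f t)) a b (fst l).
Proof.
  intros H. exact (@is_RInt_fct_extend_fst R_NormedModule R_NormedModule f a b l H).
Qed.
Lemma is_RInt_C_snd (f : R -> C) a b (l : C) :
  @is_RInt C_R_NormedModule f a b l -> is_RInt (fun t => snd (f t)) a b (snd l).
Proof.
  intros H. exact (@is_RInt_fct_extend_snd R_NormedModule R_NormedModule f a b l H).
Qed.

Lemma is_RInt_eql {V : NormedModule R_AbsRing} (f : R -> V) a b l l' :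
  l = l' -> is_RInt f a b l -> is_RInt f a b l'.
Proof. intros ->; auto. Qed.

Lemma is_RInt_Cmult_l (f : R -> C) a b (l c : C) :
  @is_RInt C_R_NormedModule f a b l ->
  @is_RInt C_R_NormedModule (fun u => c * f u)%C a b (c * l)%C.
Proof.
  intros H. pose proof (is_RInt_C_fst _ _ _ _ H) as H1.
  pose proof (is_RInt_C_snd _ _ _ _ H) as H2.
  destruct c as [c1 c2]. apply is_RInt_C_pair; simpl.
  - eapply is_RInt_ext; [|exact (is_RInt_minus _ _ _ _ _ _ (is_RInt_scal _ _ _ c1 _ H1) (is_RInt_scal _ _ _ c2 _ H2))].
    intros; reflexivity.
  - eapply is_RInt_ext; [|exact (is_RInt_plus _ _ _ _ _ _ (is_RInt_scal _ _ _ c1 _ H2) (is_RInt_scal _ _ _ c2 _ H1))].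
    intros; reflexivity.
Qed.

Lemma is_RInt_sum_n_C (F : nat -> R -> C) (L : nat -> C) a b n :
  (forall k, (k <= n)%nat -> @is_RInt C_R_NormedModule (F k) a b (L k)) ->
  @is_RInt C_R_NormedModule (fun u => @sum_n C_AbelianMonoid (fun k => F k u) n) a b (@sum_n C_AbelianMonoid L n).
Proof.
  induction n as [|n IH]; intros H.
  - eapply is_RInt_ext; [|rewrite sum_O; apply H; lia].
    intros; rewrite sum_O; reflexivity.
  - rewrite sum_Sn.
    eapply is_RInt_ext; [|exact (is_RInt_plus _ _ _ _ _ _ (IH (fun k Hk => H k (le_S _ _ Hk))) (H (S n) (le_n _)))].
    intros; rewrite sum_Sn; reflexivity.
Qed.


Lemma c_proj_eq (a b : C) : fst a = fst b -> snd a = snd b -> a = b.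
Proof. destruct a, b; simpl; intros; subst; reflexivity. Qed.

Lemma cont_of_derive (f : R -> R) x : ex_derive f x -> continuous f x.
Proof. intros H. exact (@ex_derive_continuous R_AbsRing R_NormedModule f x H). Qed.

Lemma is_RInt_cis (a W : R) : 0 < W ->
  @is_RInt C_R_NormedModule (fun u => cis (a*u)) 0 W
    (RtoC W * (cis (W/2*a) * RtoC (sinc (W/2*a))))%C.
Proof.
  intros HW. unfold sinc.
  destruct (Req_EM_T (W/2*a) 0) as [E|E].
  - assert (a = 0) by nra. subst a.
    eapply is_RInt_eql; [| eapply is_RInt_ext; [| exact (@is_RInt_const C_R_NormedModule 0 W (RtoC 1))]].
    + rewrite E. unfold cis. rewrite cos_0, sin_0.
      apply c_proj_eq; simpl; unfold scal; simpl; unfold mult; simpl; ring.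
    + intros; unfold cis. rewrite Rmult_0_l, cos_0, sin_0. reflexivity.
  - assert (Ha : a <> 0) by (intro; subst; apply E; ring).
    apply is_RInt_C_pair; simpl.
    + eapply is_RInt_eql;
      [| apply (is_RInt_derive (fun u => sin (a*u) / a) (fun u => cos (a*u)))].
      * unfold minus, plus, opp; simpl.
        replace (a*W) with (2*(W/2*a)) by field. rewrite sin_2a.
        rewrite Rmult_0_r, sin_0. field; repeat split; auto; lra.
      * intros; auto_derive; auto. field; auto.
      * intros; apply cont_of_derive; auto_derive; auto.
    + eapply is_RInt_eql;
      [| apply (is_RInt_derive (fun u => - cos (a*u) / a) (fun u => sin (a*u)))].
      * unfold minus, plus, opp; simpl.
        replace (a*W) with (2*(W/2*a)) by field. rewrite cos_2a_sin.
        rewrite Rmult_0_r, cos_0. field; repeat split; auto; lra.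
      * intros; auto_derive; auto. field; auto.
      * intros; apply cont_of_derive; auto_derive; auto.
Qed.


Ltac cfix := repeat change (@plus C_AbelianMonoid) with Cplus in *;
  repeat change (@mult C_Ring) with Cmult in *;
  try match goal with |- ?a = ?b => change (@eq C a b) end.
Ltac cring := cfix; ring.

Lemma sum_n_Cmult_l (c : C) (f : nat -> C) n :
  (c * sum_n f n)%C = sum_n (fun k => c * f k)%C n.
Proof. symmetry. exact (sum_n_mult_l (K:=C_Ring) c f n). Qed.
Lemma sum_n_Cplus (f g : nat -> C) n :
  sum_n (fun k => f k + g k)%C n = (sum_n f n + sum_n g n)%C.
Proof. exact (sum_n_plus f g n). Qed.

Lemma cis_add a b : (cis a * cis b)%C = cis (a + b).
Proof. unfold cis. apply c_proj_eq; simpl; rewrite ?cos_plus, ?sin_plus; ring. Qed.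

Lemma sum_n_shift (a : nat -> C) m :
  sum_n a (S m) = (a O + sum_n (fun l => a (S l)) m)%C.
Proof.
  induction m as [|m IH].
  - rewrite sum_Sn, !sum_O. reflexivity.
  - rewrite sum_Sn, IH, sum_Sn. cring.
Qed.

Lemma binom_cis m y :
  sum_n (fun l => RtoC (Binomial.C m l) * cis ((INR m - 2 * INR l) * y))%C m
  = RtoC ((2 * cos y) ^ m).
Proof.
  induction m as [|m IH].
  - rewrite sum_O. simpl. rewrite C_n_0. unfold cis.
    replace ((0 - 2*0)*y) with 0 by ring. rewrite cos_0, sin_0.
    apply c_proj_eq; simpl; ring.
  - set (A := (fun l => RtoC (Binomial.C m l) * cis ((INR m + 1 - 2 * INR l) * y))%C).
    set (B := (fun l => RtoC (Binomial.C m l) * cis ((INR m - 1 - 2 * INR l) * y))%C).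
    set (D := (fun l => if Compare_dec.lt_dec l m then RtoC (Binomial.C m (S l)) * cis ((INR m - 1 - 2 * INR l) * y) else RtoC 0)%C).
    assert (HR : RtoC ((2 * cos y) ^ S m) = (sum_n A m + sum_n B m)%C).
    { transitivity (sum_n (fun k => A k + B k)%C m); [| exact (sum_n_plus A B m)].
      change (RtoC (2 * cos y * (2 * cos y) ^ m) = sum_n (fun k => A k + B k)%C m).
      rewrite RtoC_mult, <- IH.
      replace (RtoC (2 * cos y)) with (cis y + cis (- y))%C.
      2: { unfold cis. apply c_proj_eq; simpl; rewrite ?cos_neg, ?sin_neg; ring. }
      rewrite sum_n_Cmult_l. apply sum_n_ext. intros l. unfold A, B.
      cfix. 
      replace (cis ((INR m + 1 - 2 * INR l) * y)) with (cis y * cis ((INR m - 2 * INR l) * y))%C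
        by (rewrite cis_add; f_equal; ring).
      replace (cis ((INR m - 1 - 2 * INR l) * y)) with (cis (-y) * cis ((INR m - 2 * INR l) * y))%C
        by (rewrite cis_add; f_equal; ring).
      ring. }
    assert (HA : sum_n A m = (A O + sum_n D m)%C).
    { destruct m as [|k].
      - rewrite !sum_O. unfold D. destruct (Compare_dec.lt_dec 0 0); [lia|]. cring.
      - rewrite sum_n_shift. rewrite sum_Sn. unfold D at 2. destruct (Compare_dec.lt_dec (S k) (S k)); [lia|].
        cfix. rewrite Cplus_0_r. f_equal. apply sum_n_ext_loc. intros l Hl.
        unfold A, D. destruct (Compare_dec.lt_dec l (S k)); [|lia]. f_equal. f_equal. rewrite !S_INR. ring. }
    rewrite HR, HA, sum_n_shift.
    replace (sum_n (fun l => RtoC (Binomial.C (S m) (S l)) * cis ((INR (S m) - 2 * INR (S l)) * y))%C m)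
      with (sum_n (fun l => B l + D l)%C m).
    2: { apply sum_n_ext_loc. intros l Hl. unfold B, D. rewrite !S_INR.
         replace ((INR m + 1 - 2 * (INR l + 1)) * y) with ((INR m - 1 - 2 * INR l) * y) by ring.
         destruct (Compare_dec.lt_dec l m) as [Hlt|Hlt].
         - rewrite <- (pascal m l Hlt). rewrite RtoC_plus. cring.
         - assert (l = m) by lia. subst l. rewrite !C_n_n. cring. }
    rewrite sum_n_Cplus. unfold A. rewrite !C_n_0, S_INR.
    replace ((INR m + 1 - 2 * INR 0) * y) with ((INR m + 1 - 2 * INR 0) * y) by ring.
    simpl INR. cring.
Qed.


Lemma int_inner Cv Kv zeta Om s m : 0 < Om ->
  @is_RInt C_R_NormedModule
    (fun u => cis (s*u) * RtoC ((- (Kv/Cv) * cos (zeta*u))^m))%C 0 (sqrt Om)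
    (RtoC (sqrt Om) * Jinner Cv Kv zeta Om s m)%C.
Proof.
  intros HOm. assert (HW : 0 < sqrt Om) by (apply sqrt_lt_R0; auto).
  set (W := sqrt Om) in *.
  unfold Jinner. rewrite sum_n_Cmult_l.
  eapply is_RInt_ext; [| eapply is_RInt_eql; [| apply (is_RInt_sum_n_C
     (fun l u => RtoC ((- (Kv/Cv/2))^m * Binomial.C m l) * cis ((s + (INR m - 2 * INR l) * zeta) * u))%C (fun l => RtoC W * Jterm Cv Kv zeta Om s m l)%C 0 W m)]].
  - intros u _. 
    replace ((- (Kv/Cv) * cos (zeta*u))^m) with ((- (Kv/Cv/2))^m * (2 * cos (zeta * u))^m)
      by (rewrite <- Rpow_mult_distr; f_equal; generalize (Kv/Cv); intro; field).
    rewrite RtoC_mult, <- binom_cis, !sum_n_Cmult_l.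
    symmetry; apply (sum_n_ext (G:=C_AbelianMonoid)). intros l. rewrite RtoC_mult.
    replace (cis ((s + (INR m - 2 * INR l) * zeta) * u)) with (cis (s*u) * cis ((INR m - 2 * INR l) * (zeta * u)))%C
      by (rewrite cis_add; f_equal; ring).
    cring.
  - reflexivity.
  - intros l Hl. simpl.
    eapply is_RInt_eql; [| apply is_RInt_Cmult_l, (is_RInt_cis _ W HW)].
    unfold Jterm. fold W. cring.
Qed.


Lemma RtoC_sum_n (f : nat -> R) n : RtoC (sum_n f n) = @sum_n C_AbelianMonoid (fun k => RtoC (f k)) n.
Proof.
  induction n as [|n IH].
  - rewrite !sum_O. reflexivity.
  - rewrite !sum_Sn, <- IH. change (RtoC (sum_n f n + f (S n)) = (RtoC (sum_n f n) + RtoC (f (S n)))%C).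
    apply RtoC_plus.
Qed.

Lemma int_partial (Cv Kv zeta Om s : R) (M : nat) : 0 < Om ->
  @is_RInt C_R_NormedModule
    (fun u => cis (s*u) * RtoC (@sum_n R_AbelianMonoid (fun m => ((- (Kv/Cv) * cos (zeta*u))^m)%R) M))%C 0 (sqrt Om)
    (RtoC (sqrt Om) * sum_n (fun m => Jinner Cv Kv zeta Om s m) M)%C.
Proof.
  intros HOm.
  eapply is_RInt_ext; [| eapply is_RInt_eql; [| apply (is_RInt_sum_n_C
     (fun m u => cis (s*u) * RtoC ((- (Kv/Cv) * cos (zeta*u))^m))%C
     (fun m => RtoC (sqrt Om) * Jinner Cv Kv zeta Om s m)%C 0 (sqrt Om) M)]].
  - intros u _. rewrite RtoC_sum_n, sum_n_Cmult_l. reflexivity.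
  - rewrite sum_n_Cmult_l. reflexivity.
  - intros m _. apply int_inner; auto.
Qed.

Lemma geom_R (x : R) M : (1 - x) * sum_n (fun m => x ^ m) M = 1 - x ^ (S M).
Proof.
  induction M as [|M IH].
  - rewrite sum_O. simpl. ring.
  - rewrite sum_Sn. change ((1 - x) * (sum_n (fun m => x ^ m) M + x ^ (S M)) = 1 - x ^ (S (S M))).
    rewrite Rmult_plus_distr_l, IH. simpl. ring.
Qed.

Lemma Cmod_cis t : Cmod (cis t) = 1.
Proof.
  unfold Cmod, cis. cbn [fst snd].
  assert (H : cos t ^ 2 + sin t ^ 2 = 1) by (rewrite <- (sin2_cos2 t); unfold Rsqr; ring).
  rewrite H. apply sqrt_1.
Qed.

Lemma ex_RInt_C (f : R -> C) a b :
  (forall x, continuous (fun u => fst (f u)) x) ->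
  (forall x, continuous (fun u => snd (f u)) x) ->
  @ex_RInt C_R_NormedModule f a b.
Proof.
  intros H1 H2.
  exists (RInt (fun u => fst (f u)) a b, RInt (fun u => snd (f u)) a b).
  apply is_RInt_C_pair; simpl; apply (RInt_correct (V:=R_CompleteNormedModule));
  apply ex_RInt_continuous; intros; auto.
Qed.


Lemma Cinv_R (r : R) : r <> 0 -> Cinv (RtoC r) = RtoC (/ r).
Proof. intros H. apply c_proj_eq; simpl; field; auto. Qed.

Lemma main_bound (Cv Kv zeta Om s : R) (M : nat) :
  0 < Cv -> Rabs (Kv/Cv) < 1 -> 0 < Om ->
  Cmod (Jfun Cv Kv zeta Om s - JM Cv Kv zeta Om M s)%C
    <= Jpref Cv Om * (Rabs (Kv/Cv) ^ (S M) / (1 - Rabs (Kv/Cv))).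
Proof.
  intros HC HR HOm.
  assert (HW : 0 < sqrt Om) by (apply sqrt_lt_R0; auto).
  set (W := sqrt Om) in *.
  set (Rv := Kv / Cv) in *. set (r := Rabs Rv) in *.
  assert (HK : Kv = Rv * Cv) by (unfold Rv; field; lra).
  assert (HX : forall u, Rabs (- Rv * cos (zeta * u)) <= r).
  { intros u. rewrite Rabs_mult, Rabs_Ropp. unfold r.
    pose proof (Rabs_pos Rv). pose proof (COS_bound (zeta*u)).
    assert (Rabs (cos (zeta*u)) <= 1) by (apply Rabs_le; lra). nra. }
  assert (Hd : forall u, Cv + Kv * cos (zeta * u) = Cv * (1 - (- Rv * cos (zeta * u)))).
  { intros u. rewrite HK. ring. }
  assert (Hpos : forall u, 0 < Cv + Kv * cos (zeta * u)).
  { intros u. rewrite Hd. apply Rmult_lt_0_compat; auto.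
    pose proof (HX u). pose proof (Rle_abs (- Rv * cos (zeta * u))). lra. }
  set (F := fun u => (cis (s*u) * RtoC (/ (Cv + Kv * cos (zeta * u))))%C).
  assert (HJ : Jfun Cv Kv zeta Om s = (RtoC (/ (2*PI)) * @RInt C_R_CompleteNormedModule F 0 W)%C).
  { unfold Jfun. f_equal. apply RInt_ext. intros u _. unfold F, Cdiv.
    rewrite Cinv_R; auto. specialize (Hpos u). lra. }
  assert (HexF : @ex_RInt C_R_NormedModule F 0 W).
  { apply ex_RInt_C; intros x; unfold F; simpl; apply cont_of_derive; auto_derive;
    specialize (Hpos x); lra. }
  pose proof (RInt_correct (V:=C_R_CompleteNormedModule) F 0 W HexF) as HIF.
  pose proof (int_partial Cv Kv zeta Om s M HOm) as HIG.
  fold W in HIG. fold Rv in HIG.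
  pose proof (@is_RInt_minus C_R_NormedModule _ _ 0 W _ _ HIF (is_RInt_Cmult_l _ _ _ _ (RtoC (/ Cv)) HIG)) as HID.
  set (B := r ^ (S M) / (Cv * (1 - r))).
  assert (Hnorm : norm (minus (@RInt C_R_CompleteNormedModule F 0 W)
                     (RtoC (/ Cv) * (RtoC W * sum_n (fun m => Jinner Cv Kv zeta Om s m) M))%C)
                  <= (W - 0) * B).
  { refine (norm_RInt_le_const _ 0 W _ B (Rlt_le _ _ HW) _ HID).
    intros x _. rewrite C_R_norm.
    set (X := - Rv * cos (zeta * x)).
    assert (HX1 : Rabs X <= r) by apply HX.
    assert (H1X : 0 < 1 - X) by (pose proof (Rle_abs X); lra).
    assert (Hsum : @eq R (@sum_n R_AbelianMonoid (fun m => X ^ m) M) ((1 - X ^ S M) / (1 - X))).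
    { pose proof (geom_R X M) as Hg. apply (Rmult_eq_reg_l (1 - X)); [| lra]. rewrite Hg. field. lra. }
    change (Cmod (F x - RtoC (/ Cv) * (cis (s * x) * RtoC (@sum_n R_AbelianMonoid (fun m => (X ^ m)%R) M)))%C <= B).
    rewrite Hsum. unfold F. rewrite Hd. fold X.
    replace (cis (s * x) * RtoC (/ (Cv * (1 - X))) - RtoC (/ Cv) * (cis (s * x) * RtoC ((1 - X ^ S M) / (1 - X))))%C
      with (cis (s * x) * RtoC (X ^ S M / (Cv * (1 - X))))%C.
    2: { replace (X ^ S M / (Cv * (1 - X))) with (/ (Cv * (1 - X)) - / Cv * ((1 - X ^ S M) / (1 - X)))
           by (field; lra).
         rewrite RtoC_minus, RtoC_mult. ring. }
    rewrite Cmod_mult, Cmod_cis, Cmod_R, Rmult_1_l.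
    unfold B, Rdiv. rewrite Rabs_mult, Rabs_inv, Rabs_mult, <- RPow_abs.
    rewrite (Rabs_right Cv) by lra. rewrite (Rabs_right (1 - X)) by lra.
    apply Rmult_le_compat.
    - apply pow_le, Rabs_pos.
    - left. apply Rinv_0_lt_compat. nra.
    - apply pow_incr. split; auto. apply Rabs_pos.
    - pose proof (Rle_abs X). apply Rinv_le_contravar.
      + apply Rmult_lt_0_compat; lra.
      + apply Rmult_le_compat_l; lra. }
  rewrite C_R_norm in Hnorm.
  rewrite HJ. unfold JM.
  replace (RtoC (/ (2 * PI)) * @RInt C_R_CompleteNormedModule F 0 W - RtoC (Jpref Cv Om) * sum_n (fun m => Jinner Cv Kv zeta Om s m) M)%C
    with (RtoC (/ (2 * PI)) * minus (@RInt C_R_CompleteNormedModule F 0 W)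
                     (RtoC (/ Cv) * (RtoC W * sum_n (fun m => Jinner Cv Kv zeta Om s m) M)))%C.
  2: { replace (Jpref Cv Om) with (/ (2 * PI) * (/ Cv * W)).
       2: { unfold Jpref. fold W. pose proof PI_RGT_0. field. repeat split; lra. }
       rewrite !RtoC_mult. change minus with Cminus. ring. }
  rewrite Cmod_mult, Cmod_R.
  pose proof PI_RGT_0.
  rewrite Rabs_right by (left; apply Rinv_0_lt_compat; lra).
  apply Rle_trans with (/ (2 * PI) * ((W - 0) * B)).
  - apply Rmult_le_compat_l; [left; apply Rinv_0_lt_compat; lra| exact Hnorm].
  - right. unfold B, Jpref. fold W. field. split; [|split]; try lra.
    all: try (unfold r; lra).
Qed.


Lemma consts (q0 q1 q2 : R) : 0 < q0 -> 0 < q1 -> 0 < q2 ->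
  0 < Cconst q0 q1 q2 /\ Rabs (Kconst q0 q1 q2 / Cconst q0 q1 q2) < 1.
Proof.
  intros H0 H1 H2. unfold Cconst, Kconst.
  replace (q0 ^ 2 / q1 ^ 2) with ((q0/q1)^2) by (field; lra).
  replace (q1 ^ 2 / q2 ^ 2) with ((q1/q2)^2) by (field; lra).
  replace (/ (8 * q0 ^ 2)) with (2 * / (16 * q0 ^ 2)) by (field; lra).
  assert (Ha : 0 < q0/q1) by (apply Rdiv_lt_0_compat; auto).
  assert (Hb : 0 < q1/q2) by (apply Rdiv_lt_0_compat; auto).
  assert (Hc : 0 < / (16 * q0 ^ 2)) by (apply Rinv_0_lt_compat; nra).
  set (a := q0/q1) in *. set (b := q1/q2) in *. set (c := / (16 * q0 ^ 2)) in *.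
  clearbody a b c.
  set (Cv := c * ((1 + a) ^ 2 * (1 + b) ^ 2 + (1 - a) ^ 2 * (1 - b) ^ 2)).
  set (Kv := 2 * c * (1 - a ^ 2) * (1 - b ^ 2)).
  assert (E1 : Cv - Kv = c * (2 * (a + b)) ^ 2) by (unfold Cv, Kv; ring).
  assert (E2 : Cv + Kv = c * (2 * (1 + a * b)) ^ 2) by (unfold Cv, Kv; ring).
  assert (P1 : 0 < c * (2 * (a + b)) ^ 2) by (apply Rmult_lt_0_compat; auto; apply pow_lt; lra).
  assert (P2 : 0 < c * (2 * (1 + a * b)) ^ 2) by (apply Rmult_lt_0_compat; auto; apply pow_lt; nra).
  assert (HC : 0 < Cv) by lra.
  split; auto.
  apply Rabs_def1.
  - replace 1 with (Cv / Cv) by (field; lra). unfold Rdiv.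
    apply Rmult_lt_compat_r; [apply Rinv_0_lt_compat|]; lra.
  - replace (- (1)) with (- Cv / Cv) by (field; lra). unfold Rdiv.
    apply Rmult_lt_compat_r; [apply Rinv_0_lt_compat|]; lra.
Qed.

Lemma series_field (J Sig S0 : C) (p : R) : p <> 0 -> S0 = (J * RtoC (/ p))%C ->
  (Sig - S0 = - RtoC (/ p) * (J - RtoC p * Sig))%C /\ J = (RtoC p * S0)%C.
Proof.
  intros Hp ->.
  assert (H1 : (RtoC (/ p) * RtoC p = 1)%C) by (rewrite <- RtoC_mult, Rinv_l; auto).
  split.
  - replace (- RtoC (/ p) * (J - RtoC p * Sig))%C with (- RtoC (/ p) * J + (RtoC (/ p) * RtoC p) * Sig)%C by ring.
    rewrite H1. ring.
  - replace (RtoC p * (J * RtoC (/ p)))%C with (J * (RtoC (/ p) * RtoC p))%C by ring.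
    rewrite H1. ring.
Qed.


Theorem theorem4p2 (p0 p1 p2 T Om : R) :
  0 < p0 -> 0 < p1 -> 0 < p2 -> 0 < T -> 0 < Om ->
  let q0 := qk p0 in let q1 := qk p1 in let q2 := qk p2 in
  let Cv := Cconst q0 q1 q2 in
  let Kv := Kconst q0 q1 q2 in
  let zeta := 2 * q1 * T in
  let Rv := Kv / Cv in
  (forall s : R, exists S : C,
      is_series (fun m => Jinner Cv Kv zeta Om s m) S /\
      Jfun Cv Kv zeta Om s = (RtoC (Jpref Cv Om) * S)%C) /\
  (forall (M : nat) (s : R),
      Cmod (Jfun Cv Kv zeta Om s - JM Cv Kv zeta Om M s)%C
        <= Jpref Cv Om * (Rabs Rv ^ (S M) / (1 - Rabs Rv))).
Proof.
  intros H0 H1 H2 HT HOm q0 q1 q2 Cv Kv zeta Rv.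
  assert (Hq : forall p, 0 < p -> 0 < qk p)
    by (intros; unfold qk; apply Rinv_0_lt_compat, sqrt_lt_R0; auto).
  destruct (consts q0 q1 q2 (Hq _ H0) (Hq _ H1) (Hq _ H2)) as [HC HR].
  fold Cv Kv in HC, HR. fold Rv in HR.
  assert (HB : forall (M : nat) (s : R),
      Cmod (Jfun Cv Kv zeta Om s - JM Cv Kv zeta Om M s)%C
        <= Jpref Cv Om * (Rabs Rv ^ (S M) / (1 - Rabs Rv)))
    by (intros; apply main_bound; auto).
  split; [|exact HB].
  intros s.
  assert (Hp : 0 < Jpref Cv Om).
  { unfold Jpref. apply Rdiv_lt_0_compat; [apply sqrt_lt_R0; auto|].
    pose proof PI_RGT_0. apply Rmult_lt_0_compat; lra. }
  set (p := Jpref Cv Om) in *.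
  set (J := Jfun Cv Kv zeta Om s) in *.
  exists (J * RtoC (/ p))%C.
  split; [| apply (series_field J 0 _ p); [lra | reflexivity]].
  unfold is_series. apply (filterlim_locally_ball_norm (K:=C_AbsRing) (U:=C_NormedModule)).
  intros eps. set (r := Rabs Rv) in *.
  assert (Hr0 : 0 <= r) by apply Rabs_pos.
  assert (Hr : Rabs r < 1) by (rewrite Rabs_right; lra).
  assert (He : 0 < eps * (1 - r)) by (apply Rmult_lt_0_compat; [apply cond_pos| lra]).
  destruct (pow_lt_1_zero r Hr _ He) as [N HN].
  exists N. intros n Hn. unfold ball_norm.
  change (Cmod (sum_n (fun m => Jinner Cv Kv zeta Om s m) n - J * RtoC (/ p))%C < eps).
  destruct (series_field J (sum_n (fun m => Jinner Cv Kv zeta Om s m) n) _ p ltac:(lra) eq_refl) as [E _].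
  rewrite E. rewrite Cmod_mult.
  specialize (HB n s). unfold JM in HB. fold p J in HB.
  assert (Hopp : Cmod (- RtoC (/ p))%C = / p).
  { replace (- RtoC (/ p))%C with (RtoC (- / p)) by (apply c_proj_eq; simpl; ring).
    rewrite Cmod_R, Rabs_Ropp, Rabs_right; [reflexivity|].
    left; apply Rinv_0_lt_compat; auto. }
  rewrite Hopp.
  specialize (HN (S n) ltac:(lia)). rewrite Rabs_right in HN by (apply Rle_ge, pow_le; auto).
  apply Rle_lt_trans with (/ p * (p * (r ^ S n / (1 - r)))).
  - apply Rmult_le_compat_l; [left; apply Rinv_0_lt_compat; auto| exact HB].
  - replace (/ p * (p * (r ^ S n / (1 - r)))) with (r ^ S n / (1 - r)) by (field; lra).
    apply (Rmult_lt_reg_r (1 - r)); [lra|].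
    replace (r ^ S n / (1 - r) * (1 - r)) with (r ^ S n) by (field; lra). exact HN.
Qed.
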